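(* Consider the md-value protocol described in the context, run on top of reliable point-to-point channels. In every well-formed execution of this protocol the following two properties hold. (i) Validity: if the event $\text{md-value-deliver}(t,c_s)_s$ occurs at some server $s\in\mathcal{S}$, then it is preceded by an event $\text{md-value-send}(t,v)_w$ at some writer $w$, with $t\in\mathcal{T}$ and $c_s=\Phi_s(v)$. (ii) Uniformity: if the event $\text{md-value-deliver}(t,c_s)_s$ occurs at some server $s\in\mathcal{S}$, and at most $f$ servers crash during the execution, then the event $\text{md-value-deliver}(t,c_{s'})_{s'}$ occurs at every non-faulty server $s'\in\mathcal{S}$, where $c_{s'}=\Phi_{s'}(v)$ (this must hold even if the writer that invoked $\text{md-value-send}(t,v)$ crashes after the invocation).
   Context: System model: an asynchronous message-passing system with a set $\mathcal{W}$ of writers, a set $\mathcal{R}$ of readers and a set $\mathcal{S}$ of $n$ servers. Process identifiers are totally ordered and the servers in this order are $s_1<s_2<\dots<s_n$. Every client–server pair and every server–server pair is joined by a reliable point-to-point channel: a message placed on a channel is eventually delivered if the destination does not crash, even if the sender crashes afterwards; no assumption is made on delivery order. Processes fail only by crashing; at most $f$ servers may crash, where $1\le f\le (n-1)/2$; any number of clients may crash. An execution is well-formed if every client invokes a new operation only after its previous one has completed. Coding: values lie in a set $V$; an $[n,k]$ MDS code over a finite field $\mathbb{F}_q$ with encoder $\Phi$ maps a value $v$ to $n$ coded elements, $\Phi_s(v)$ being the coded element associated to server $s$. Tags are elements of a totally ordered set $\mathcal{T}$. The md-value protocol: a writer $p$ invokes $\text{md-value-send}(t,v)_p$ with $t\in\mathcal{T}$,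 $v\in V$. This creates a fresh unique message identifier $mID$ (a pair of $p$ and a counter of $p$'s invocations), and $p$ sends the message $(mID,(t,v),\text{''full''})$ to the servers $s_1,\dots,s_{f+1}$, in this order; after all these messages are sent, $p$ outputs $\text{md-value-send-ack}(t)_p$. A server $s_i$ that receives a ''full'' message $(mID,(t,v),\text{''full''})$ for an identifier $mID$ it has not seen before: sends $(mID,(t,v),\text{''full''})$ to $s_{i+1},\dots,s_{f+1}$ (in order), sends the message $(mID,(t,\Phi_{s'}(v)),\text{''coded''})$ to every server $s'\notin\{s_1,\dots,s_{f+1}\}$, and then delivers its own coded element via the output event $\text{md-value-deliver}(t,\Phi_{s_i}(v))_{s_i}$. A server that receives a ''coded'' message $(mID,(t,c),\text{''coded''})$ for an identifier whose content it has not yet delivered outputs $\text{md-value-deliver}(t,c)_s$. Each server delivers at most once per message identifier. Crashed processes take no further steps. *)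

(* Defs.v *)
From mathcomp Require Import all_boot all_order.
Set Implicit Arguments. Unset Strict Implicit. Unset Printing Implicit Defensive.

(* "Any k coded elements determine the value": the decoding property of an
   [n,k] MDS code (coordinates restricted to any k servers are injective). *)
Definition mds_code (n : nat) (V C : Type) (k : nat) (Phi : 'I_n -> V -> C) :=
  (0 < k <= n) /\
  forall S : {set 'I_n}, #|S| = k ->
    forall v v' : V, (forall s, s \in S -> Phi s v = Phi s v') -> v = v'.

Section Protocol.
Variables (W : eqType) (T V C : Type) (n : nat).

(* processes: writers (inl) and servers (inr); server s_i is ordinal i-1 *)
Definition proc := (W + 'I_n)%type.
(* message identifiers: (writer, invocation counter of that writer) *)
Definition mid := (W * nat)%type.

Inductive msg :=
| Full  of mid & T & V
| Coded of mid & T & C.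

(* pending local actions of a process (its ongoing, non-atomic handler) *)
Inductive action :=
| ASend of proc & msg
| ADeliver of T & C
| AAck of T.

Inductive label :=
| LInvoke of W & T & V
| LAck of W & T
| LSend of proc & proc & msg
| LRecv of proc & proc & msg
| LDeliver of 'I_n & T & C
| LCrash of proc
| LSkip.

Record config := Cfg {
  crashed : proc -> bool;
  prog    : proc -> seq action;
  ctr     : W -> nat;
  handled : 'I_n -> seq mid;
  net     : seq (proc * proc * msg)    (* in-transit messages (multiset) *)
}.

Definition upd (A : eqType) (B : Type) (g : A -> B) (a : A) (b : B) :=
  fun x => if x == a then b else g x.

Definition init_config : config :=
  Cfg (fun _ => false) (fun _ => [::]) (fun _ => 0) (fun _ => [::]) [::].

Variables (f : nat) (Phi : 'I_n -> V -> C).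

(* s_1 < ... < s_{f+1} are the ordinals 0..f *)
Definition in_full (s : 'I_n) : bool := s < f.+1.

Definition writer_actions (m : mid) (t : T) (v : V) : seq action :=
  map (fun s => ASend (inr s) (Full m t v)) (filter (fun s : 'I_n => in_full s) (enum 'I_n)) ++ [:: AAck t].

Definition server_full_actions (s : 'I_n) (m : mid) (t : T) (v : V) :=
  map (fun s' => ASend (inr s') (Full m t v)) (filter (fun s' : 'I_n => (s < s') && in_full s') (enum 'I_n))
  ++ map (fun s' => ASend (inr s') (Coded m t (Phi s' v))) (filter (fun s' : 'I_n => ~~ in_full s') (enum 'I_n))
  ++ [:: ADeliver t (Phi s v)].

Definition set_prog (c : config) (p : proc) (a : seq action) : config :=
  Cfg (crashed c) (upd (prog c) p a) (ctr c) (handled c) (net c).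

Definition do_invoke (c : config) (w : W) (t : T) (v : V) : config :=
  Cfg (crashed c)
      (upd (prog c) (inl w) (prog c (inl w) ++ writer_actions (w, ctr c w) t v))
      (upd (ctr c) w (ctr c w).+1) (handled c) (net c).

Definition react (q : proc) (m : msg) (c : config) : config :=
  match q with
  | inl _ => c
  | inr s =>
    match m with
    | Full i t v =>
        if i \in handled c s then c else
        Cfg (crashed c)
            (upd (prog c) (inr s) (prog c (inr s) ++ server_full_actions s i t v))
            (ctr c) (upd (handled c) s (i :: handled c s)) (net c)
    | Coded i t x =>
        if i \in handled c s then c else
        Cfg (crashed c)
            (upd (prog c) (inr s) (prog c (inr s) ++ [:: ADeliver t x]))
            (ctr c) (upd (handled c) s (i :: handled c s)) (net c)
    end
  end.

Inductive step : config -> label -> config -> Prop :=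
| st_invoke c w t v :
    ~~ crashed c (inl w) -> step c (LInvoke w t v) (do_invoke c w t v)
| st_send c p q m rest :
    ~~ crashed c p -> prog c p = ASend q m :: rest ->
    step c (LSend p q m)
      (Cfg (crashed c) (upd (prog c) p rest) (ctr c) (handled c) ((p, q, m) :: net c))
| st_ack c w t rest :
    ~~ crashed c (inl w) -> prog c (inl w) = AAck t :: rest ->
    step c (LAck w t) (set_prog c (inl w) rest)
| st_deliver c s t x rest :
    ~~ crashed c (inr s) -> prog c (inr s) = ADeliver t x :: rest ->
    step c (LDeliver s t x) (set_prog c (inr s) rest)
| st_recv c p q m n1 n2 :
    ~~ crashed c q -> net c = n1 ++ (p, q, m) :: n2 ->
    step c (LRecv p q m)
      (react q m (Cfg (crashed c) (prog c) (ctr c) (handled c) (n1 ++ n2)))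
| st_crash c p :
    ~~ crashed c p ->
    step c (LCrash p)
      (Cfg (upd (crashed c) p true) (prog c) (ctr c) (handled c) (net c))
| st_skip c : step c LSkip c.

Definition correct (lab : nat -> label) (p : proc) : Prop :=
  forall j, lab j <> LCrash p.

Definition local_step_of (p : proc) (l : label) : Prop :=
  match l with
  | LSend p' _ _ => p' = p
  | LAck w _ => inl w = p
  | LDeliver s _ _ => inr s = p
  | _ => False
  end.

Definition execution (cfg : nat -> config) (lab : nat -> label) : Prop :=
  cfg 0 = init_config /\
  (forall i, step (cfg i) (lab i) (cfg i.+1)) /\
  (* reliable channels: a message in transit to a non-crashing process is
     eventually received (whatever happens to the sender) *)
  (forall i p q m, (exists n1 n2, net (cfg i) = n1 ++ (p, q, m) :: n2) -> correct lab q ->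
     exists j, i <= j /\ lab j = LRecv p q m) /\
  (forall i p, correct lab p -> prog (cfg i) p <> [::] ->
     exists j, i <= j /\ local_step_of p (lab j)).

Definition well_formed (lab : nat -> label) : Prop :=
  forall w i j t t' v v', i < j ->
    lab i = LInvoke w t v -> lab j = LInvoke w t' v' ->
    exists k t'', i < k < j /\ lab k = LAck w t''.

End Protocol.

Arguments LInvoke {W T V C n}.
Arguments LAck {W T V C n}.
Arguments LSend {W T V C n}.
Arguments LRecv {W T V C n}.
Arguments LDeliver {W T V C n}.
Arguments LCrash {W T V C n}.
Arguments LSkip {W T V C n}.
Arguments Full {W T V C}.
Arguments Coded {W T V C}.

(* Main.v *)
Require Import Defs.
From mathcomp Require Import all_boot all_order zify.
From Stdlib Require List Classical_Prop.
Set Implicit Arguments. Unset Strict Implicit. Unset Printing Implicit Defensive.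

Definition ordlt (n : nat) : rel 'I_n := fun a b => nat_of_ord a < nat_of_ord b.

Lemma ord_sorted n (P : pred 'I_n) : sorted (@ordlt n) (filter P (enum 'I_n)).
Proof.
apply: sorted_filter; first by move=> a b c; rewrite /ordlt; apply: ltn_trans.
have := iota_ltn_sorted 0 n; rewrite -val_enum_ord sorted_map.
by apply: sub_sorted.
Qed.

Lemma map_sorted_split n (A : Type) (g : 'I_n -> A) (r : seq 'I_n) pre a post :
  sorted (@ordlt n) r -> map g r = pre ++ a :: post ->
  exists x, a = g x /\ x \in r /\ forall y, y \in r -> y < x -> List.In (g y) pre.
Proof.
elim: r pre => [|x0 r IH] [|h pre] //= Hs [].
- move=> <- _; exists x0; split=> //; split; first by rewrite inE eqxx.
  move=> y; rewrite inE => /orP[/eqP->|Hy]; first by rewrite ltnn.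
  have : all (ordlt x0) r.
    have Htr : transitive (@ordlt n) by move=> b a' c; rewrite /ordlt; apply: ltn_trans.
    by rewrite (path_sortedE Htr) in Hs; case/andP: Hs.
  move/allP/(_ _ Hy); rewrite /ordlt => H1 H2; lia.
- move=> Hh Hm.
  have Hs' : sorted (@ordlt n) r by apply: (path_sorted Hs).
  have [x [Ha [Hx Hy]]] := IH _ Hs' Hm.
  exists x; split=> //; split; first by rewrite inE Hx orbT.
  move=> y; rewrite inE => /orP[/eqP->|Hy'] Hlt; first by left.
  by right; apply: Hy.
Qed.

Lemma cat_split (A : Type) (s1 s2 pre post : seq A) a :
  s1 ++ s2 = pre ++ a :: post ->
  (exists post', s1 = pre ++ a :: post') \/
  (exists pre2, pre = s1 ++ pre2 /\ s2 = pre2 ++ a :: post).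
Proof.
elim: s1 pre => [|x s1 IH] pre /=; first by move=> ->; right; exists pre.
case: pre => [|y pre] /= E.
- by left; exists s1; case: E => ->.
- case: E => Hx H. rewrite Hx. case: (IH _ H) => [[p' ->]|[p2 [-> ->]]]; first by left; exists p'.
  by right; exists p2.
Qed.

Arguments ASend {W T V C n}.
Arguments ADeliver {W T V C n}.
Arguments AAck {W T V C n}.

Section Main.
Variables (W : eqType) (T V C : Type) (n f : nat) (Phi : 'I_n -> V -> C).

Definition matches (p : proc W n) (h : action W T V C n) (l : label W T V C n) :=
  (forall q m, h = ASend q m -> l = LSend p q m) /\
  (forall t x s, p = inr s -> h = ADeliver t x -> l = LDeliver s t x).

Lemma upd_same (A : eqType) B (g : A -> B) a b : upd g a b a = b.
Proof. by rewrite /upd eqxx. Qed.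
Lemma upd_other (A : eqType) B (g : A -> B) a b x : x != a -> upd g a b x = g x.
Proof. by rewrite /upd => /negbTE ->. Qed.

Lemma react_prog q m (c : config W T V C n) p :
  exists e, prog (react f Phi q m c) p = prog c p ++ e.
Proof.
case: q => [w|s] /=; first by exists [::]; rewrite cats0.
case: m => [i t v|i t x].
- case: ifP => _; first by exists [::]; rewrite cats0.
  rewrite /= /upd; case: eqP => [->|_]; first by eexists.
  by exists [::]; rewrite cats0.
- case: ifP => _; first by exists [::]; rewrite cats0.
  rewrite /= /upd; case: eqP => [->|_]; first by eexists.
  by exists [::]; rewrite cats0.
Qed.

Lemma step_prog c l c' p : step f Phi c l c' ->
  (local_step_of p l /\ exists h, prog c p = h :: prog c' p /\ matches p h l) \/
  (~ local_step_of p l /\ exists e, prog c' p = prog c p ++ e).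
Proof.
case=> {c l c'}.
- move=> c w t v _; right; split=> //=.
  rewrite /upd; case: eqP => [->|_]; first by eexists.
  by exists [::]; rewrite cats0.
- move=> c p0 q m rest _ Hp /=.
  case: (eqVneq p p0) => [->|ne].
  + left; split=> //; exists (ASend q m); rewrite upd_same Hp; split=> //.
    by split=> [q' m' [-> ->] //|t' x' s' _ //].
  + right; split; first by move=> E; rewrite E eqxx in ne.
    by exists [::]; rewrite upd_other // cats0.
- move=> c w t rest _ Hp /=.
  case: (eqVneq p (inl w)) => [->|ne].
  + left; split=> //; exists (AAck t); rewrite /set_prog /= upd_same Hp; by do ?split.
  + right; split; first by move=> E; rewrite E eqxx in ne.
    by exists [::]; rewrite /set_prog /= upd_other // cats0.
- move=> c s t x rest _ Hp /=.
  case: (eqVneq p (inr s)) => [->|ne].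
  + left; split=> //; exists (ADeliver t x); rewrite /set_prog /= upd_same Hp; split=> //.
    by split=> // t' x' s' [->] [-> ->].
  + right; split; first by move=> E; rewrite E eqxx in ne.
    by exists [::]; rewrite /set_prog /= upd_other // cats0.
- move=> c p0 q m n1 n2 _ _; right; split=> //.
  exact: react_prog.
- move=> c p0 _; right; split=> //; by exists [::]; rewrite cats0.
- move=> c; right; split=> //; by exists [::]; rewrite cats0.
Qed.


Variables (cfg : nat -> config W T V C n) (lab : nat -> label W T V C n).
Hypothesis Hexec : execution f Phi cfg lab.

Lemma Hstep i : step f Phi (cfg i) (lab i) (cfg i.+1).
Proof. by case: Hexec => _ [H _]. Qed.

Lemma progress p a : correct lab p -> forall k i pre post, size pre < k ->
  prog (cfg i) p = pre ++ a :: post -> exists j, i <= j /\ matches p a (lab j).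
Proof.
move=> Hc; elim=> [//|k IH] i pre post Hk Hp.
have [_ [_ [_ Hfair]]] := Hexec.
have [j0 [Hij0 Hl]] : exists j, i <= j /\ local_step_of p (lab j).
  by apply: Hfair Hc _; rewrite Hp; case: pre {Hk Hp}.
suffices H : forall d i pre post, size pre < k.+1 ->
    prog (cfg i) p = pre ++ a :: post -> local_step_of p (lab (i + d)) ->
    exists j, i <= j /\ matches p a (lab j).
  by apply: (H (j0 - i) i pre post) => //; rewrite subnKC.
elim=> [|d IHd] i' pre' post' Hk' Hp' Hl';
  case: (step_prog p (Hstep i')) => [[_ [h [Hph Hm]]]|[Hn [e He]]].
- case: pre' Hk' Hp' => [|h' pre''] Hk' Hp'.
  + by exists i'; split=> //; move: Hph; rewrite Hp' => -[-> _].
  + move: Hph; rewrite Hp' /= => -[_ Hq].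
    have [j [Hj Hmj]] := IH i'.+1 pre'' post' Hk' (esym Hq).
    by exists j; split=> //; apply: ltnW.
- by rewrite addn0 in Hl'.
- case: pre' Hk' Hp' => [|h' pre''] Hk' Hp'.
  + by exists i'; split=> //; move: Hph; rewrite Hp' => -[-> _].
  + move: Hph; rewrite Hp' /= => -[_ Hq].
    have [j [Hj Hmj]] := IH i'.+1 pre'' post' Hk' (esym Hq).
    by exists j; split=> //; apply: ltnW.
- have Hp2 : prog (cfg i'.+1) p = pre' ++ a :: (post' ++ e) by rewrite He Hp' -catA.
  have [j [Hj Hmj]] := IHd i'.+1 pre' (post' ++ e) Hk' Hp2 ltac:(by rewrite addSnnS).
  by exists j; split=> //; apply: ltnW.
Qed.


Local Notation act := (action W T V C n).

Definition sentF i (m : mid W) (l : 'I_n) :=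
  exists j p t v, j < i /\ lab j = LSend p (inr l) (Full m t v).
Definition bornb i (m : mid W) (t : T) (v : V) :=
  exists j, j < i /\ lab j = LInvoke m.1 t v /\ ctr (cfg j) m.1 = m.2.
Definition okFb i (pre : seq act) m (P : pred 'I_n) :=
  forall l', in_full f l' -> P l' ->
    sentF i m l' \/ exists t v, List.In (ASend (inr l') (Full m t v)) pre.

Definition AI i (p : proc W n) (pre : seq act) (a : act) : Prop :=
  match a with
  | ASend q (Full m t v) => bornb i m t v /\
      exists l, q = inr l /\ in_full f l /\ okFb i pre m (fun l' => l' < l)
  | ASend q (Coded m t x) => exists v, bornb i m t v /\
      exists l, q = inr l /\ ~~ in_full f l /\ x = Phi l v /\ okFb i pre m predT
  | ADeliver t x => forall s, p = inr s ->
      exists m v, bornb i m t v /\ x = Phi s v /\ okFb i pre m predT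
  | AAck _ => True
  end.

Definition NI i (e : proc W n * proc W n * msg W T V C) :=
  AI i e.1.1 [::] (ASend e.1.2 e.2) /\
  forall l m t v, e.1.2 = inr l -> e.2 = Full m t v -> sentF i m l.

Definition Inv i (c : config W T V C n) :=
  (forall p pre a post, prog c p = pre ++ a :: post -> AI i p pre a) /\
  (forall e, List.In e (net c) -> NI i e).

Lemma sentF_mono i i' m l : i <= i' -> sentF i m l -> sentF i' m l.
Proof. move=> H [j [p [t [v [Hj E]]]]]; exists j, p, t, v; split=> //; exact: leq_trans Hj H. Qed.

Lemma bornb_mono i i' m t v : i <= i' -> bornb i m t v -> bornb i' m t v.
Proof. move=> H [j [Hj E]]; exists j; split=> //; exact: leq_trans Hj H. Qed.

Lemma okFb_mono i i' pre pre' m P : i <= i' -> (forall x, List.In x pre -> List.In x pre') ->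
  okFb i pre m P -> okFb i' pre' m P.
Proof.
move=> H Hin Hok l' Hf HP; case: (Hok l' Hf HP) => [Hs|[t [v Ht]]].
- by left; apply: sentF_mono Hs.
- by right; exists t, v; apply: Hin.
Qed.

Lemma AI_mono i i' p pre pre' a : i <= i' -> (forall x, List.In x pre -> List.In x pre') ->
  AI i p pre a -> AI i' p pre' a.
Proof.
move=> H Hin; case: a => [q [m t v|m t x]|t x|t] //=.
- case=> Hb [l [Hq [Hl Hok]]]; split; first exact: bornb_mono Hb.
  by exists l; do 2!split=> //; apply: okFb_mono Hok.
- case=> v [Hb [l [Hq [Hl [Hx Hok]]]]]; exists v; split; first exact: bornb_mono Hb.
  by exists l; do 3!split=> //; apply: okFb_mono Hok.
- move=> Hs s Hp; case: (Hs s Hp) => m [v [Hb [Hx Hok]]]; exists m, v.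
  split; first exact: bornb_mono Hb.
  by split=> //; apply: okFb_mono Hok.
Qed.

Lemma NI_mono i i' e : i <= i' -> NI i e -> NI i' e.
Proof.
move=> H [H1 H2]; split; first exact: AI_mono H1.
by move=> l m t v E1 E2; apply: sentF_mono (H2 l m t v E1 E2).
Qed.

Lemma okFb_pop i h pre m P :
  (forall l' t v, h = ASend (inr l') (Full m t v) -> sentF i.+1 m l') ->
  okFb i (h :: pre) m P -> okFb i.+1 pre m P.
Proof.
move=> Hh Hok l' Hf HP; case: (Hok l' Hf HP) => [Hs|[t [v [Ht|Ht]]]].
- by left; apply: sentF_mono Hs.
- by left; apply: (Hh l' t v).
- by right; exists t, v.
Qed.

Lemma AI_pop i p h pre a :
  (forall l' m t v, h = ASend (inr l') (Full m t v) -> sentF i.+1 m l') ->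
  AI i p (h :: pre) a -> AI i.+1 p pre a.
Proof.
move=> Hh; case: a => [q [m t v|m t x]|t x|t] //=.
- case=> Hb [l [Hq [Hl Hok]]]; split; first exact: bornb_mono Hb.
  by exists l; do 2!split=> //; apply: okFb_pop Hok => l' t' v'; apply: Hh.
- case=> v [Hb [l [Hq [Hl [Hx Hok]]]]]; exists v; split; first exact: bornb_mono Hb.
  by exists l; do 3!split=> //; apply: okFb_pop Hok => l' t' v'; apply: Hh.
- move=> Hs s Hp; case: (Hs s Hp) => m [v [Hb [Hx Hok]]]; exists m, v.
  split; first exact: bornb_mono Hb.
  by split=> //; apply: okFb_pop Hok => l' t' v'; apply: Hh.
Qed.

Lemma In_mem (A : eqType) (x : A) s : x \in s -> List.In x s.
Proof. elim: s => //= y s IH; rewrite inE => /orP[/eqP->|H]; [by left|by right; apply: IH]. Qed.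


Lemma react_net q m (c : config W T V C n) : net (react f Phi q m c) = net c.
Proof. by case: q => //= s; case: m => [i t v|i t x]; case: ifP. Qed.

Lemma okFb_nil_sent i m P l' : okFb i [::] m P -> in_full f l' -> P l' -> sentF i m l'.
Proof. by move=> H Hf HP; case: (H l' Hf HP) => // -[t [v []]]. Qed.

Lemma inv_init : Inv 0 (cfg 0).
Proof.
have [H0 _] := Hexec; rewrite H0; split=> /=.
- by move=> p [|? ?] ? ?.
- by [].
Qed.


Lemma inv_step i c l c' : step f Phi c l c' -> c = cfg i -> l = lab i -> Inv i c -> Inv i.+1 c'.
Proof.
case=> {c l c'}.
-
  move=> c w t v _ Hc Hl [Hp Hn]; subst c; split; last first.
    by move=> e He; apply: NI_mono (Hn e He).
  move=> p pre a post /=; rewrite /upd; case: eqP => [Ep|_] H; last first.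
    by apply: AI_mono (Hp _ _ _ _ H).
  subst p; case: (cat_split H) => [[post' H']|[pre2 [Epre H']]].
    by apply: AI_mono (Hp _ _ _ _ H').
  rewrite /writer_actions in H'.
  case: (cat_split H') => [[post' H2]|[pre3 [Epre2 H3]]].
  + have [x [Ea [Hx Hy]]] := map_sorted_split (ord_sorted _) H2.
    subst a => /=; split.
      by exists i; split=> //; split=> //; rewrite -Hl.
    exists x; split=> //; split; first by move: Hx; rewrite mem_filter => /andP[].
    move=> l' Hf Hlt; right; exists t, v; rewrite Epre; apply: List.in_or_app; right.
    by apply: Hy => //; rewrite mem_filter Hf mem_enum.
  + by case: pre3 Epre2 H3 => [|? [|? ?]] //= _ [<-].
-
  move=> c p0 q m rest _ Hp0 Hc Hl [Hp Hn]; subst c; split.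
  + move=> p pre a post /=; rewrite /upd; case: eqP => [->|_] H; last first.
      by apply: AI_mono (Hp _ _ _ _ H).
    apply: (@AI_pop i p0 (ASend q m) pre a).
      by move=> l' m' t v [Eq Em]; exists i, p0, t, v; split=> //; rewrite -Hl Eq Em.
    by apply: (Hp p0 (ASend q m :: pre) a post); rewrite Hp0 H.
  + move=> e /= [<-|He]; last by apply: NI_mono (Hn e He).
    split=> /=.
      by apply: (@AI_mono i) (Hp p0 [::] (ASend q m) rest Hp0).
    by move=> l m' t v /= Eq Em; exists i, p0, t, v; split=> //; rewrite -Hl Eq Em.
-
  move=> c w t rest _ Hp0 Hc Hl [Hp Hn]; subst c; split; last first.
    by move=> e He; apply: NI_mono (Hn e He).
  move=> p pre a post; rewrite /set_prog /= /upd; case: eqP => [->|_] H; last first.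
    by apply: AI_mono (Hp _ _ _ _ H).
  apply: (@AI_pop i (inl w) (AAck t) pre a) => //.
  by apply: (Hp _ _ _ post); rewrite Hp0 H.
-
  move=> c s t x rest _ Hp0 Hc Hl [Hp Hn]; subst c; split; last first.
    by move=> e He; apply: NI_mono (Hn e He).
  move=> p pre a post; rewrite /set_prog /= /upd; case: eqP => [->|_] H; last first.
    by apply: AI_mono (Hp _ _ _ _ H).
  apply: (@AI_pop i (inr s) (ADeliver t x) pre a) => //.
  by apply: (Hp _ _ _ post); rewrite Hp0 H.
-
  move=> c p0 q m n1 n2 _ Hnet Hc Hl [Hp Hn]; subst c.
  have Hin : List.In (p0, q, m) (net (cfg i)).
    by rewrite Hnet; apply: List.in_or_app; right; left.
  have [HAI HS] := Hn _ Hin.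
  split; last first.
    move=> e; rewrite react_net /= => He; apply: NI_mono (Hn e _) => //.
    rewrite Hnet; apply: List.in_or_app.
    by case: (List.in_app_or _ _ _ He) => H; [left|right; right].
  move=> p pre a post.
  clear Hin Hnet Hl; case: q HAI HS => [w|s] HAI HS /=.
    by move=> H; apply: AI_mono (Hp _ _ _ _ H).
  case: m HAI HS => [mi t v|mi t x] HAI HS /=.
  + case: ifP => _ /= H; first by apply: AI_mono (Hp _ _ _ _ H).
    move: H; rewrite /upd; case: eqP => [Ep|_] H; last first.
      by apply: AI_mono (Hp _ _ _ _ H).
    subst p; case: HAI => /= Hb [l [[El] [Hfl Hok]]]; subst l.
    have Hss : sentF i mi s by apply: (HS s mi t v).
    have Hle : forall l', in_full f l' -> l' <= s -> sentF i.+1 mi l'.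
      move=> l' Hf; rewrite leq_eqVlt => /orP[/eqP E|Hlt].
        have -> : l' = s by apply: val_inj.
        exact: sentF_mono Hss.
      exact: sentF_mono (okFb_nil_sent Hok Hf Hlt).
    have HA1 : forall l', in_full f l' -> sentF i.+1 mi l' \/
        exists t' v', List.In (ASend (inr l') (Full mi t' v') : act)
          (map (fun s' => (ASend (inr s') (Full mi t v) : act))
             (filter (fun s' : 'I_n => (s < s') && in_full f s') (enum 'I_n))).
      move=> l' Hf; case: (leqP l' s) => Hls; first by left; apply: Hle.
      right; exists t, v; apply: (List.in_map (fun s' => ASend (inr s') (Full mi t v))).
      by apply: In_mem; rewrite mem_filter Hls Hf mem_enum.
    case: (cat_split H) => [[post' H']|[pre2 [Epre H']]].
      by apply: AI_mono (Hp _ _ _ _ H').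
    subst pre; rewrite /server_full_actions in H'.
    case: (cat_split H') => [[post' H2]|[pre3 [Epre2 H3]]].
    * have [x [Ea [Hx Hy]]] := map_sorted_split (ord_sorted _) H2.
      subst a => /=; split; first exact: bornb_mono Hb.
      move: Hx; rewrite mem_filter => /andP[/andP[Hsx Hfx] _].
      exists x; split=> //; split=> //.
      move=> l' Hf Hlt; case: (leqP l' s) => Hls; first by left; apply: Hle.
      right; exists t, v; apply: List.in_or_app; right.
      by apply: Hy => //; rewrite mem_filter Hls Hf mem_enum.
    * subst pre2.
      have Hokall : forall pre4, okFb i.+1 (prog (cfg i) (inr s) ++
          (map (fun s' => (ASend (inr s') (Full mi t v) : act))
             (filter (fun s' : 'I_n => (s < s') && in_full f s') (enum 'I_n)) ++ pre4)) mi predT.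
        move=> pre4 l' Hf _; case: (HA1 l' Hf) => [Hs|[t' [v' Hin']]]; first by left.
        right; exists t', v'; apply: List.in_or_app; right; apply: List.in_or_app; by left.
      case: (cat_split H3) => [[post' H4]|[pre4 [Epre3 H5]]].
      - have [x [Ea [Hx Hy]]] := map_sorted_split (ord_sorted _) H4.
        subst a => /=; exists v; split; first exact: bornb_mono Hb.
        move: Hx; rewrite mem_filter => /andP[Hfx _]; exists x; do 3!split=> //; exact: Hokall.
      - case: pre4 Epre3 H5 => [|? [|? ?]] //= Epre3 [Ea _]; subst a.
        move=> s0 [<-]; exists mi, v; split; first exact: bornb_mono Hb.
        by split=> //; apply: Hokall.
  + case: ifP => _ /= H; first by apply: AI_mono (Hp _ _ _ _ H).
    move: H; rewrite /upd; case: eqP => [Ep|_] H; last first.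
      by apply: AI_mono (Hp _ _ _ _ H).
    subst p; case: HAI => /= v [Hb [l [[El] [Hfl [Hx Hok]]]]]; subst l.
    case: (cat_split H) => [[post' H']|[pre2 [Epre H']]].
      by apply: AI_mono (Hp _ _ _ _ H').
    case: pre2 Epre H' => [|? [|? ?]] //= Epre [Ea _]; subst a.
    move=> s0 [<-]; exists mi, v; split; first exact: bornb_mono Hb.
    split=> // l' Hf _; left.
    exact: sentF_mono (okFb_nil_sent Hok Hf _).
-
  move=> c p0 _ Hc Hl [Hp Hn]; subst c; split.
  + by move=> p pre a post H; apply: AI_mono (Hp _ _ _ _ H).
  + by move=> e He; apply: NI_mono (Hn e He).
-
  move=> c Hc Hl [Hp Hn]; subst c; split.
  + by move=> p pre a post H; apply: AI_mono (Hp _ _ _ _ H).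
  + by move=> e He; apply: NI_mono (Hn e He).
Qed.

Lemma inv_all i : Inv i (cfg i).
Proof.
elim: i => [|i IH]; first exact: inv_init.
exact: (inv_step (Hstep i) erefl erefl IH).
Qed.


Definition mid_of (m : msg W T V C) : mid W :=
  match m with Full i _ _ => i | Coded i _ _ => i end.
Definition acts (s : 'I_n) (m : msg W T V C) : seq act :=
  match m with
  | Full i t v => server_full_actions f Phi s i t v
  | Coded i t x => [:: ADeliver t x]
  end.

Lemma step_deliver (c c' : config W T V C n) s t x : step f Phi c (LDeliver s t x) c' ->
  exists rest, prog c (inr s) = ADeliver t x :: rest.
Proof. by move=> H; inversion H; subst; eexists; eassumption. Qed.

Lemma step_send (c c' : config W T V C n) p q m : step f Phi c (LSend p q m) c' -> net c' = (p, q, m) :: net c.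
Proof. by move=> H; inversion H; subst. Qed.

Lemma react_handled s m (c : config W T V C n) :
  mid_of m \in handled (react f Phi (inr s) m c) s.
Proof.
case: m => [i t v|i t x] /=; case: ifP => // _; by rewrite /= /upd eqxx inE eqxx.
Qed.

Lemma step_recv (c c' : config W T V C n) p s m : step f Phi c (LRecv p (inr s) m) c' ->
  mid_of m \in handled c' s.
Proof. move=> H; inversion H; subst; exact: react_handled. Qed.

Lemma handled_new (c c' : config W T V C n) l s mi : step f Phi c l c' ->
  mi \notin handled c s -> mi \in handled c' s ->
  exists p msg, List.In (p, inr s, msg) (net c) /\ mid_of msg = mi /\
    prog c' (inr s) = prog c (inr s) ++ acts s msg.
Proof.
case=> {c l c'} //=.
- by move=> c w t v _ /negbTE ->.
- by move=> c p0 q m rest _ _ /negbTE ->.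
- by move=> c w t rest _ _ /negbTE ->.
- by move=> c s0 t x rest _ _ /negbTE ->.
- move=> c p0 q m n1 n2 _ Hnet Hn.
  case: q Hnet => [w|s0] Hnet /=; first by rewrite (negbTE Hn).
  case: m Hnet => [i t v|i t x] Hnet /=; case: ifP => Hi /=; try by rewrite (negbTE Hn).
  + rewrite /upd; case: eqP => [E|_]; last by rewrite (negbTE Hn).
    subst s0; rewrite inE => /orP[/eqP E|H]; last by rewrite H in Hn.
    exists p0, (Full i t v); split.
      by rewrite Hnet; apply: List.in_or_app; right; left.
    by split=> //=; rewrite eqxx.
  + rewrite /upd; case: eqP => [E|_]; last by rewrite (negbTE Hn).
    subst s0; rewrite inE => /orP[/eqP E|H]; last by rewrite H in Hn.
    exists p0, (Coded i t x); split.
      by rewrite Hnet; apply: List.in_or_app; right; left.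
    by split=> //=; rewrite eqxx.
- by move=> c p0 _ /negbTE ->.
- by move=> c /negbTE ->.
Qed.

Lemma first_handle s mi i : mi \in handled (cfg i) s ->
  exists j p msg, List.In (p, inr s, msg) (net (cfg j)) /\ mid_of msg = mi /\
    prog (cfg j.+1) (inr s) = prog (cfg j) (inr s) ++ acts s msg.
Proof.
elim: i => [|i IH].
  by move=> H; have [H0 _] := Hexec; rewrite H0 in H.
case: (boolP (mi \in handled (cfg i) s)) => [H _|Hn Hc]; first exact: IH.
have [p [msg H]] := handled_new (Hstep i) Hn Hc.
by exists i, p, msg.
Qed.

Lemma ctr_step (c c' : config W T V C n) l w : step f Phi c l c' ->
  ctr c w <= ctr c' w /\ forall t v, l = LInvoke w t v -> ctr c' w = (ctr c w).+1.
Proof.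
case=> {c l c'}.
- move=> c w' t v _ /=; rewrite /upd; case: (eqVneq w w') => [->|ne]; split=> //.
  by move=> t' v' [E _]; rewrite E eqxx in ne.
- by move=> *; split.
- by move=> *; split.
- by move=> *; split.
- move=> c p0 q m n1 n2 _ _; case: q => [w'|s] /=; first by split.
  by case: m => [i t v|i t x] /=; case: ifP.
- by move=> *; split.
- by move=> *; split.
Qed.

Lemma ctr_mono i j w : i <= j -> ctr (cfg i) w <= ctr (cfg j) w.
Proof.
move=> /subnKC <-; elim: (j - i) => [|d IH]; first by rewrite addn0.
by rewrite addnS; apply: leq_trans IH (proj1 (ctr_step w (Hstep _))).
Qed.

Lemma born_uniq i i' m t v t' v' : bornb i m t v -> bornb i' m t' v' -> t = t' /\ v = v'.
Proof.
move=> [j [_ [Hl Hc]]] [j' [_ [Hl' Hc']]].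
have key : forall (a b : nat) (ta : T) (va : V), lab a = LInvoke m.1 ta va -> ctr (cfg a) m.1 = m.2 ->
    ctr (cfg b) m.1 = m.2 -> a < b -> False.
  move=> a b ta va Ha Hca Hcb Hab.
  have := ctr_mono m.1 Hab; rewrite ((proj2 (ctr_step m.1 (Hstep a))) _ _ Ha) Hca Hcb.
  by rewrite ltnn.
case: (ltngtP j j') => [Hjj|Hjj|E].
- by case: (key j j' t v Hl Hc Hc' Hjj).
- by case: (key j' j t' v' Hl' Hc' Hc Hjj).
- by move: Hl; rewrite E Hl' => -[-> ->].
Qed.

Lemma validity_core i s t x : lab i = LDeliver s t x ->
  exists m v, bornb i m t v /\ x = Phi s v /\ okFb i [::] m predT.
Proof.
move=> Hl; have := Hstep i; rewrite Hl => /step_deliver [rest Hr].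
have [Hp _] := inv_all i.
exact: (Hp (inr s) [::] (ADeliver t x) rest Hr s erefl).
Qed.

Lemma send_handled j p s msg : lab j = LSend p (inr s) msg -> correct lab (inr s) ->
  exists j', mid_of msg \in handled (cfg j') s.
Proof.
move=> Hl Hc; have := Hstep j; rewrite Hl => /step_send Hn.
have [_ [_ [Hrel _]]] := Hexec.
have [j' [_ Hr]] := Hrel j.+1 p (inr s) msg (ex_intro _ [::] (ex_intro _ (net (cfg j)) Hn)) Hc.
exists j'.+1; have := Hstep j'; rewrite Hr; exact: step_recv.
Qed.

Lemma deliver_from_prog s t x i pre post : correct lab (inr s) ->
  prog (cfg i) (inr s) = pre ++ ADeliver t x :: post -> exists j, lab j = LDeliver s t x.
Proof.
move=> Hc Hp; have [j [_ [_ Hm]]] := progress Hc (ltnSn (size pre)) Hp.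
by exists j; apply: Hm.
Qed.

Lemma handled_deliver s mi t v i0 i : correct lab (inr s) -> bornb i0 mi t v ->
  mi \in handled (cfg i) s -> exists j, lab j = LDeliver s t (Phi s v).
Proof.
move=> Hc Hb Hh; have [j [p [msg [Hin [Hmid Hpr]]]]] := first_handle Hh.
have [_ Hn] := inv_all j; have [HAI _] := Hn _ Hin.
case: msg Hin Hmid Hpr HAI => [mi' t' v'|mi' t' x] Hin /= Hmid Hpr; subst mi'.
- case=> Hb' _; have [<- <-] := born_uniq Hb' Hb.
  apply: (deliver_from_prog (i := j.+1) (pre := prog (cfg j) (inr s) ++
     (map (fun s' => (ASend (inr s') (Full mi t' v') : act))
        (filter (fun s' : 'I_n => (s < s') && in_full f s') (enum 'I_n)) ++
      map (fun s' => (ASend (inr s') (Coded mi t' (Phi s' v')) : act))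
        (filter (fun s' : 'I_n => ~~ in_full f s') (enum 'I_n)))) (post := [::])) => //.
  by rewrite Hpr /server_full_actions !catA.
- case=> v' [Hb' [l [[El] [_ [Hx _]]]]]; subst l x.
  have [<- <-] := born_uniq Hb' Hb.
  exact: (deliver_from_prog (i := j.+1) (post := [::]) Hc Hpr).
Qed.


Lemma mem_split_ex (A : eqType) (x : A) s : x \in s -> exists s1 s2, s = s1 ++ x :: s2.
Proof.
elim: s => //= y s IH; rewrite inE => /orP[/eqP->|H]; first by exists [::], s.
by have [s1 [s2 ->]] := IH H; exists (y :: s1), s2.
Qed.

Lemma uniform_core i t m v : bornb i m t v -> okFb i [::] m predT ->
  (exists l, in_full f l /\ correct lab (inr l)) ->
  forall s', correct lab (inr s') -> exists j', lab j' = LDeliver s' t (Phi s' v).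
Proof.
move=> Hb Hok [l [Hfl Hcl]] s' Hc'.
case: (boolP (in_full f s')) => Hf'.
- have [j0 [p [t0 [v0 [_ Hl0]]]]] := @okFb_nil_sent i m predT s' Hok Hf' isT.
  have [j' Hh] := send_handled Hl0 Hc'.
  exact: handled_deliver Hc' Hb Hh.
- have [j0 [p [t0 [v0 [_ Hl0]]]]] := @okFb_nil_sent i m predT l Hok Hfl isT.
  have [j' Hh] := send_handled Hl0 Hcl.
  have [j [p' [msg [Hin [Hmid Hpr]]]]] := first_handle Hh.
  have [_ Hn] := inv_all j; have [HAI _] := Hn _ Hin.
  case: msg Hin Hmid Hpr HAI => [mi' t' v'|mi' t' x] Hin /= Hmid Hpr; subst mi'; last first.
    by case=> v' [_ [l' [[El] [Hnf _]]]]; subst l'; rewrite Hfl in Hnf.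
  case=> Hb' _; have [Et Ev] := born_uniq Hb' Hb; subst t' v'.
  have Hmem : s' \in filter (fun s0 : 'I_n => ~~ in_full f s0) (enum 'I_n).
    by rewrite mem_filter Hf' mem_enum.
  have [r1 [r2 Er]] := mem_split_ex Hmem.
  have Hp2 : prog (cfg j.+1) (inr l) =
      (prog (cfg j) (inr l) ++
        map (fun s0 => (ASend (inr s0) (Full m t v) : act))
          (filter (fun s0 : 'I_n => (l < s0) && in_full f s0) (enum 'I_n)) ++
        map (fun s0 => (ASend (inr s0) (Coded m t (Phi s0 v)) : act)) r1) ++
      (ASend (inr s') (Coded m t (Phi s' v)) : act) ::
        (map (fun s0 => (ASend (inr s0) (Coded m t (Phi s0 v)) : act)) r2 ++
         [:: ADeliver t (Phi l v)]).
    by rewrite Hpr /server_full_actions Er map_cat /= -!catA.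
  have [j2 [_ [Hm _]]] := progress Hcl (ltnSn _) Hp2.
  have Hl2 := Hm _ _ erefl.
  have [j3 Hh3] := send_handled Hl2 Hc'.
  exact: handled_deliver Hc' Hb Hh3.
Qed.

Lemma correct_full_exists : f < n ->
  (forall S : {set 'I_n}, (forall s, s \in S -> ~ correct lab (inr s)) -> #|S| <= f) ->
  exists l, in_full f l /\ correct lab (inr l).
Proof.
move=> Hnf Hcount; apply: Classical_Prop.NNPP => Hno.
have H1 := Hcount [set l : 'I_n | in_full f l].
have : #|[set l : 'I_n | in_full f l]| <= f.
  by apply: H1 => s; rewrite inE => Hs Hc; apply: Hno; exists s.
have Hinj : injective (widen_ord (n := f.+1) Hnf).
  by move=> a b /(congr1 val) /= /val_inj.
have Hsub : [set widen_ord Hnf x | x in 'I_f.+1] \subset [set l : 'I_n | in_full f l].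
  apply/subsetP => y /imsetP [x _ ->]; rewrite inE /in_full /=; exact: ltn_ord.
have := subset_leq_card Hsub; rewrite card_imset // card_ord => Ha Hb.
have := leq_trans Ha Hb; by rewrite ltnn.
Qed.

End Main.

Theorem theorem1 (W : eqType) (d : Order.disp_t) (T : orderType d)
  (V C : Type) (n f k : nat) (Phi : 'I_n -> V -> C)
  (Hf1 : 1 <= f) (Hfn : f <= (n - 1)./2) (Hmds : mds_code k Phi)
  (cfg : nat -> config W T V C n) (lab : nat -> label W T V C n)
  (Hexec : execution f Phi cfg lab) (Hwf : well_formed lab) :
  (* (i) validity *)
  (forall i s t c, lab i = LDeliver s t c ->
     exists j w v, j < i /\ lab j = LInvoke w t v /\ c = Phi s v) /\
  (* (ii) uniformity *)
  ((forall S : {set 'I_n}, (forall s, s \in S -> ~ correct lab (inr s)) -> #|S| <= f) ->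
   forall i s t c, lab i = LDeliver s t c ->
     exists j w v, j < i /\ lab j = LInvoke w t v /\ c = Phi s v /\
       forall s', correct lab (inr s') ->
         exists j', lab j' = LDeliver s' t (Phi s' v)).
Proof.
have Hnf : f < n.
  move: Hfn; rewrite geq_half_double -addnn => H; lia.
split.
- move=> i s t c Hl.
  have [m [v [[j [Hj [Hlj _]]] [Hc _]]]] := validity_core Hexec Hl.
  by exists j, m.1, v.
- move=> Hcount i s t c Hl.
  have [m [v [Hb [Hc Hok]]]] := validity_core Hexec Hl.
  have [j [Hj [Hlj _]]] := Hb.
  exists j, m.1, v; do 3!split=> //.
  move=> s' Hc'.
  exact: (uniform_core Hexec Hb Hok (correct_full_exists Hnf Hcount) Hc').
Qed.
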